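(* Let $X$ be an algebraic variety and $Z\subset X$ a Zariski closed subset. Then for every $s\in\mathcal{S}(X)$, the restriction $s|_Z$ belongs to $\mathcal{S}(Z)$.
   Context: An affine algebraic variety is a topological space with a sheaf of real-valued functions isomorphic as a ringed space (via a ''closed embedding'' $i$) to an algebraic set $Y\subset\mathbb{R}^n$ (common zero locus of real polynomials) with its Zariski topology and sheaf of regular functions. An algebraic variety is a topological space with a sheaf of real-valued functions admitting a finite open cover by affine algebraic varieties; Zariski open and Zariski closed subsets of algebraic varieties (with the induced structure) are algebraic varieties, and Zariski open/closed subsets of affine ones are affine. For an algebraic set $Y\subset\mathbb{R}^n$, $\mathcal{S}(Y)$ is the space of restrictions to $Y$ of classical Schwartz functions on $\mathbb{R}^n$; for affine $X$, $\mathcal{S}(X)=\{f:f\circ i^{-1}\in\mathcal{S}(i(X))\}$ (independent of $i$). For a general algebraic variety $X$ with a finite affine open cover $X=\bigcup_{i=1}^kX_i$, $\mathcal{S}(X)$ is the set of functions of the form $\sum_{i=1}^k\mathrm{Ext}_{X_i}^X(s_i)$ with $s_i\in\mathcal{S}(X_i)$ and $\mathrm{Ext}$ denoting extension by zero (this is independent of the cover). *)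

(* Defs.v *)
From HB Require Import structures.
From mathcomp Require Import all_boot all_order all_algebra.
From mathcomp Require Import all_classical all_reals all_analysis.
Set Implicit Arguments. Unset Strict Implicit. Unset Printing Implicit Defensive.
Import Order.TTheory GRing.Theory Num.Theory.
Import numFieldNormedType.Exports.
Local Open Scope classical_set_scope.
Local Open Scope ring_scope.

Section RealAlgebraicVarieties.
Context {R : realType}.

Inductive is_poly (n : nat) : ('rV[R]_n -> R) -> Prop :=
| poly_const (c : R) : is_poly (fun _ => c)
| poly_coord (i : 'I_n) : is_poly (fun x => x ord0 i)
| poly_add p q : is_poly p -> is_poly q -> is_poly (fun x => p x + q x)
| poly_mul p q : is_poly p -> is_poly q -> is_poly (fun x => p x * q x).

Definition algebraic_set (n : nat) (Y : set 'rV[R]_n) : Prop :=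
  exists P : set ('rV[R]_n -> R),
    (forall p, P p -> is_poly p) /\ Y = [set x | forall p, P p -> p x = 0].

Definition zclosed (n : nat) (Y A : set 'rV[R]_n) : Prop :=
  exists B, algebraic_set B /\ A = Y `&` B.
Definition zopen (n : nat) (Y U : set 'rV[R]_n) : Prop :=
  U `<=` Y /\ zclosed Y (Y `\` U).

Definition regular (n : nat) (Y U : set 'rV[R]_n) (f : 'rV[R]_n -> R) : Prop :=
  forall x, U x -> exists p q V, [/\ is_poly p, is_poly q, zopen Y V,
    V x /\ V `<=` U & forall y, V y -> q y != 0 /\ f y = p y / q y].

Definition pderiv (n : nat) (i : 'I_n) (f : 'rV[R]_n -> R) : 'rV[R]_n -> R :=
  fun x => 'D_(delta_mx 0 i) f x.
Definition iter_pderiv (n : nat) (s : seq 'I_n) (f : 'rV[R]_n -> R) :=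
  foldr (@pderiv n) f s.
Definition schwartz (n : nat) (f : 'rV[R]_n -> R) : Prop :=
  [/\ forall s, continuous (iter_pderiv s f),
      forall s i x, derivable (iter_pderiv s f) x (delta_mx 0 i)
    & forall s p, is_poly p -> exists M : R,
        forall x, `|p x * iter_pderiv s f x| <= M].

(* ---------- Spaces with a sheaf of real functions ----------
   A space is given by a carrier S : set T, a family of open sets op
   (subsets of S), and O U = the set of functions (T -> R, only values on U
   matter) that are sections of the sheaf on the open U. *)
Definition is_topology (T : Type) (S : set T) (op : set (set T)) : Prop :=
  [/\ forall U, op U -> U `<=` S, op set0, op S,
      forall U V, op U -> op V -> op (U `&` V)
    & forall (I : Type) (F : I -> set T), (forall i, op (F i)) ->
        op (\bigcup_i F i)].

Definition is_fun_sheaf (T : Type) (S : set T) (op : set (set T))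
    (O : set T -> set (T -> R)) : Prop :=
  [/\ forall U f g, op U -> O U f -> (forall x, U x -> f x = g x) -> O U g,
      forall U V f, op U -> op V -> V `<=` U -> O U f -> O V f
    & forall U f, op U ->
        (forall x, U x -> exists V, [/\ op V, V x, V `<=` U & O V f]) ->
        O U f].

(* an isomorphism of ringed spaces phi from (S, op, O) onto the algebraic set Y
   with its Zariski topology and sheaf of regular functions *)
Definition affine_chart (T : Type) (S : set T) (op : set (set T))
    (O : set T -> set (T -> R)) (n : nat) (Y : set 'rV[R]_n)
    (phi : T -> 'rV[R]_n) : Prop :=
  [/\ algebraic_set Y,
      (forall x y, S x -> S y -> phi x = phi y -> x = y),
      phi @` S = Y,
      (forall U, U `<=` S -> (op U <-> zopen Y (phi @` U)))
    & forall V g, zopen Y V ->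
        (regular Y V g <-> O (S `&` phi @^-1` V) (g \o phi))].

Definition affine (T : Type) (S : set T) (op : set (set T))
    (O : set T -> set (T -> R)) : Prop :=
  exists n (Y : set 'rV[R]_n) phi, affine_chart S op O Y phi.

Definition open_opens (T : Type) (op : set (set T)) (W : set T) : set (set T) :=
  [set U | op U /\ U `<=` W].

(* induced structure on a closed subset Z *)
Definition closed_opens (T : Type) (op : set (set T)) (Z : set T)
    : set (set T) :=
  [set V | exists U, op U /\ V = U `&` Z].
Definition closed_sheaf (T : Type) (op : set (set T))
    (O : set T -> set (T -> R)) (Z : set T) : set T -> set (T -> R) :=
  fun V f => forall x, V x -> exists U g,
    [/\ op U, U x, O U g & forall y, U y -> V y -> f y = g y].

Definition variety (T : Type) (S : set T) (op : set (set T))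
    (O : set T -> set (T -> R)) : Prop :=
  [/\ is_topology S op, is_fun_sheaf S op O
    & exists k (W : 'I_k -> set T), [/\ forall i, op (W i),
        \bigcup_i W i = S
      & forall i, affine (W i) (open_opens op (W i)) O]].

Definition schwartz_affine (T : Type) (S : set T) (op : set (set T))
    (O : set T -> set (T -> R)) (s : T -> R) : Prop :=
  exists n (Y : set 'rV[R]_n) phi, affine_chart S op O Y phi /\
    exists f, schwartz f /\ forall x, S x -> s x = f (phi x).

(* Schwartz functions on an algebraic variety: sums of extensions by zero
   of Schwartz functions on the members of a finite affine open cover *)
Definition schwartz_var (T : Type) (S : set T) (op : set (set T))
    (O : set T -> set (T -> R)) (s : T -> R) : Prop :=
  exists k (W : 'I_k -> set T) (si : 'I_k -> T -> R),
    [/\ forall i, op (W i), \bigcup_i W i = S,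
        forall i, schwartz_affine (W i) (open_opens op (W i)) O (si i)
      & forall x, S x ->
          s x = \sum_(i < k) (if `[< W i x >] then si i x else 0)].

End RealAlgebraicVarieties.

(* Main.v *)
Require Import Defs.
From HB Require Import structures.
From mathcomp Require Import all_boot all_order all_algebra.
From mathcomp Require Import all_classical all_reals all_analysis.
From Stdlib Require ClassicalEpsilon.
Import Order.TTheory GRing.Theory Num.Theory.
Local Open Scope classical_set_scope.
Local Open Scope ring_scope.

Lemma alg_inter (R : realType) (n : nat) (A B : set 'rV[R]_n) :
  algebraic_set A -> algebraic_set B -> algebraic_set (A `&` B).
Proof.
move=> [P [HP ->]] [Q [HQ ->]]; exists (P `|` Q); split.
  by move=> p [/HP|/HQ].
apply/seteqP; split=> x /=.
  by move=> [h1 h2] p [/h1|/h2].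
by move=> h; split=> p Pp; apply: h; [left|right].
Qed.

Lemma alg_union (R : realType) (n : nat) (A B : set 'rV[R]_n) :
  algebraic_set A -> algebraic_set B -> algebraic_set (A `|` B).
Proof.
move=> [P [HP ->]] [Q [HQ ->]].
exists [set r | exists p q, [/\ P p, Q q & r = (fun x => p x * q x)]]; split.
  by move=> r [p [q [Pp Qq ->]]]; apply: poly_mul; [apply: HP|apply: HQ].
apply/seteqP; split=> x /=.
  move=> [h|h] r [p [q [Pp Qq ->]]].
    by rewrite (h _ Pp) mul0r.
  by rewrite (h _ Qq) mulr0.
move=> h; case: (pselect (forall p, P p -> p x = 0)) => [hA|hA]; [left|right]=> //.
move=> q Qq; apply: contrapT => hq; apply: hA => p Pp.
have := h _ (ex_intro _ p (ex_intro _ q (And3 Pp Qq erefl))).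
by move/eqP; rewrite mulf_eq0 => /orP [/eqP //| /eqP //].
Qed.

Lemma alg_zero (R : realType) (n : nat) (q : 'rV[R]_n -> R) :
  is_poly q -> algebraic_set [set y | q y = 0].
Proof.
move=> pq; exists [set q]; split; first by move=> p ->.
apply/seteqP; split=> x /=; first by move=> h p ->.
by move=> h; apply: h.
Qed.

Lemma chart_closed (R : realType) (T : Type) (S : set T)
    (op : set (set T)) (O : set T -> set (T -> R)) (Z W : set T)
    (n : nat) (Y : set 'rV[R]_n) (phi : T -> 'rV[R]_n) :
  is_topology S op -> is_fun_sheaf S op O -> W `<=` S -> op W ->
  op (S `\` Z) ->
  affine_chart W (open_opens op W) O Y phi ->
  affine_chart (W `&` Z) (open_opens (closed_opens op Z) (W `&` Z))
    (closed_sheaf op O Z) (phi @` (W `&` Z)) phi.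
Proof.
move=> [_ _ _ opI _] [shE shR _] WS opW oSZ [algY inj imW topch shch].
have F1 U : op U -> U `<=` W -> zopen Y (phi @` U).
  by move=> oU sU; apply/(topch _ sU).
have F2 U : U `<=` W -> zopen Y (phi @` U) -> op U.
  by move=> sU /(topch _ sU) [].
have phiW z : W z -> Y (phi z) by move=> Wz; rewrite -imW; exists z.
have memI A z : W z -> A `<=` W -> (phi @` A) (phi z) <-> A z.
  move=> Wz sA; split; last by move=> Az; exists z.
  by case=> z' Az' e; rewrite -(inj _ _ (sA _ Az') Wz e).
set Y' := phi @` (W `&` Z).
have Y'Y : Y' `<=` Y by move=> y [z [Wz _] <-]; apply: phiW.
split.
-
  have := F1 _ (opI _ _ opW oSZ) (@subIsetl _ _ _).
  move=> [_ [B [algB eqB]]].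
  suff -> : Y' = Y `&` B by apply: alg_inter.
  apply/seteqP; split=> y.
    move=> [z [Wz Zz] <-]; rewrite -eqB; split; first exact: phiW.
    by move=> [z' [Wz' [_ nZ]] e]; apply: nZ; rewrite (inj _ _ Wz' Wz e).
  move=> YB; have : (Y `\` phi @` (W `&` (S `\` Z))) y by rewrite eqB.
  case=> Yy nimg; move: Yy; rewrite -imW => -[z Wz ez]; exists z => //.
  split => //; apply: contrapT => nZ; apply: nimg; exists z => //.
  by split => //; split => //; apply: WS.
- by move=> x y [Wx _] [Wy _]; apply: inj.
- by [].
- move=> U sU; split.
  + move=> [[U0 [opU0 eU]] _]; subst U.
    have sU1 : U0 `&` W `<=` W by apply: subIsetr.
    have [_ [B1 [alB1 eq1]]] := F1 _ (opI _ _ opU0 opW) sU1.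
    split; first by move=> y [z Uz <-]; rewrite /Y'; exists z; [exact: sU|by []].
    exists B1; split => //; apply/seteqP; split=> y.
      move=> [[z [Wz Zz] <-] nimg]; split; first by exists z.
      suff : (Y `&` B1) (phi z) by case.
      rewrite -eq1; split; first exact: phiW.
      move/(memI _ _ Wz sU1) => [U0z _]; apply: nimg; exists z => //.
    move=> [[z [Wz Zz] <-] B1z].
    have : (Y `&` B1) (phi z) by split => //; apply: phiW.
    rewrite -eq1 => -[_ nimg]; split; first by exists z.
    move=> [z' [U0z' Zz'] e]; apply: nimg; exists z' => //; split => //.
    by rewrite (inj _ _ _ Wz e) //; have [] := sU _ (conj U0z' Zz').
  + move=> [subY' [B [alB eqB]]].
    pose U0 := W `&` [set z | ~ B (phi z)].
    have sU0 : U0 `<=` W by apply: subIsetl.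
    have opU0 : op U0.
      apply: F2 => //; split; first by move=> y [z [Wz _] <-]; apply: phiW.
      exists B; split => //; apply/seteqP; split=> y.
        move=> [Yy nimg]; split => //; move: Yy; rewrite -imW => -[z Wz ez].
        apply: contrapT => nB; apply: nimg; exists z => //; split => //.
        by rewrite /= ez.
      move=> [Yy By]; split => // -[z [_ nB] ez]; by apply: nB; rewrite ez.
    split => //; exists U0; split => //.
    apply/seteqP; split=> z.
      move=> Uz; have [Wz Zz] := sU _ Uz; split => //; split => //.
      move=> Bz.
      have : (Y' `&` B) (phi z) by split => //; exists z.
      by rewrite -eqB => -[_]; apply; exists z.
    move=> [[Wz nB] Zz].
    have : (phi @` U) (phi z).
      apply: contrapT => nimg; apply: nB.
      have : (Y' `\` phi @` U) (phi z) by split => //; exists z.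
      by rewrite eqB => -[].
    by move/(memI _ _ Wz (fun x h => (sU x h).1)).
- move=> V g [subV [B2 [alB2 eq2]]]; split.
  + move=> reg x [[Wx Zx] Vx].
    have [p [q [V'' [pp pq [subV'' [B [alB eqB]]] [V''x V''V] hq]]]] := reg _ Vx.
    pose C := B `|` [set y | q y = 0].
    have alC : algebraic_set C by apply: alg_union => //; apply: alg_zero.
    pose Vq := Y `\` C.
    have zVq : zopen Y Vq.
      split; first by move=> y [].
      exists C; split => //; apply/seteqP; split=> y.
        by move=> [Yy nVq]; split => //; apply: contrapT => nC; apply: nVq.
      by move=> [Yy Cy]; split => // -[].
    have regq : regular Y Vq (fun y => p y / q y).
      move=> y Vqy; exists p, q, Vq; split => //.
      by split.
      by move=> y' [_ nC]; split => //; apply/eqP => q0; apply: nC; right.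
    have OU := (shch _ _ zVq).1 regq.
    pose U := W `&` phi @^-1` Vq.
    have imU : phi @` U = Vq.
      apply/seteqP; split=> y; first by move=> [z [_ ?] <-].
      move=> Vqy; have := Vqy.1; rewrite -imW => -[z Wz ez].
      by exists z => //; split => //; rewrite /= ez.
    have opU : op U by apply: F2; [apply: subIsetl | rewrite imU].
    have nBy y : Y' y -> ~ B y -> V'' y.
      move=> Y'y nB; apply: contrapT => nV; apply: nB.
      have : (Y' `\` V'') y by [].
      by rewrite eqB => -[].
    exists U, ((fun y => p y / q y) \o phi); split => //.
      split => //; split; first exact: phiW.
      move=> [By|/eqP q0]; last by have [] := hq _ V''x; rewrite q0.
      have : (Y' `&` B) (phi x) by split => //; exists x.
      by rewrite -eqB => -[].
    move=> y [Wy [Yy nC]] [[_ Zy] Vy] /=.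
    have V''y : V'' (phi y).
      by apply: nBy; [exists y | move=> By; apply: nC; left].
    by have [_ ->] := hq _ V''y.
  + move=> hcs y Vy.
    have := subV _ Vy; move=> -[x [Wx Zx] ex]; subst y.
    have [U [g0 [opU Ux OUg0 agree]]] := hcs x (conj (conj Wx Zx) Vy).
    pose U1 := U `&` W.
    have sU1 : U1 `<=` W by apply: subIsetr.
    have opU1 : op U1 by apply: opI.
    have OU1 : O U1 g0 by apply: (shR U) => //; apply: subIsetl.
    have [h hh] : exists h : 'rV[R]_n -> R, forall z, W z -> h (phi z) = g0 z.
      exists (fun y => g0 (ClassicalEpsilon.epsilon (inhabits x) (fun z => W z /\ phi z = y))).
      move=> z Wz.
      have [Wz' ez'] : W (ClassicalEpsilon.epsilon (inhabits x) (fun z' => W z' /\ phi z' = phi z))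
          /\ phi (ClassicalEpsilon.epsilon (inhabits x) (fun z' => W z' /\ phi z' = phi z)) = phi z.
        exact: (ClassicalEpsilon.epsilon_spec (inhabits x) (fun z' => W z' /\ phi z' = phi z) (ex_intro _ z (conj Wz erefl))).
      by rewrite (inj _ _ Wz' Wz ez').
    pose V1 := phi @` U1.
    have zV1 : zopen Y V1 by apply: F1.
    have eU1 : W `&` phi @^-1` V1 = U1.
      apply/seteqP; split=> z; last by move=> U1z; split; [apply: sU1 | exists z].
      by move=> [Wz /(memI _ _ Wz sU1)].
    have OV1 : O (W `&` phi @^-1` V1) (h \o phi).
      rewrite eU1; apply: (shE _ g0) => // z U1z /=; by rewrite hh //; apply: sU1.
    have regV1 := (shch _ _ zV1).2 OV1.
    have [p [q [Vq [pp pq [subVq [B1 [alB1 eq1]]] [Vqx VqV1] hq]]]] :=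
      regV1 (phi x) (ex_intro2 _ _ x (conj Ux Wx) erefl).
    exists p, q, (Y' `&` Vq `&` V); split => //.
    * split; first by move=> y [[]].
      exists (B1 `|` B2); split; first exact: alg_union.
      apply/seteqP; split=> y.
        move=> [Y'y nV'']; split => //.
        case: (pselect (Vq y)) => [Vqy|nVq]; [right|left].
          have : (Y' `\` V) y by split => // Vy'; apply: nV''.
          by rewrite eq2 => -[].
        have : (Y `\` Vq) y by split => //; apply: Y'Y.
        by rewrite eq1 => -[].
      move=> [Y'y [B1y|B2y]]; split => // -[[_ Vqy] Vy'].
        have : (Y `&` B1) y by split => //; apply: Y'Y.
        by rewrite -eq1 => -[].
      have : (Y' `&` B2) y by split.
      by rewrite -eq2 => -[].
    * split; last by move=> y [].
      by split => //; split => //; exists x.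
    * move=> y [[[z [Wz Zz] <-] Vqy] Vy'].
      have [qn hpq] := hq _ Vqy; split => //.
      have [z' U1z' ez'] := VqV1 _ Vqy.
      have ezz : z' = z by apply: inj => //; apply: sU1.
      subst z'.
      have -> : g (phi z) = g0 z by apply: (agree z); [exact: U1z'.1 | split].
      by rewrite -hpq hh.
Qed.

Theorem proposition5p3 (R : realType) (T : Type) (S : set T)
    (op : set (set T)) (O : set T -> set (T -> R)) (Z : set T) (s : T -> R) :
  variety S op O ->
  Z `<=` S -> op (S `\` Z) ->
  schwartz_var S op O s ->
  schwartz_var Z (closed_opens op Z) (closed_sheaf op O Z) s.
Proof.
move=> [top sh _] ZS oSZ [k [W [si [opW cov aff hs]]]].
have WS i : W i `<=` S by rewrite -cov => x Wx; exists i.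
exists k, (fun i => W i `&` Z), si; split.
- by move=> i; exists (W i).
- apply/seteqP; split=> x; first by move=> [i _ []].
  move=> Zx; have : S x by apply: ZS.
  by rewrite -cov => -[i _ Wx]; exists i.
- move=> i; have [n [Y [phi [ch [f [sf hf]]]]]] := aff i.
  exists n, (phi @` (W i `&` Z)), phi; split.
    exact: (@chart_closed R T S op O Z (W i) n Y phi top sh (WS i) (opW i) oSZ ch).
  by exists f; split => // x [Wx _]; apply: hf.
- move=> x Zx; rewrite (hs x (ZS x Zx)); apply: eq_bigr => i _.
  case: (asboolP (W i x)) => Wx; case: asboolP => // h; exfalso; [exact: h (conj Wx Zx) | exact: Wx h.1].
Qed.
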